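(* Let $G$ be a unit square graph. Then $G$ has no induced subgraph isomorphic to $K_{2,3}$, to $\overline{3K_2}$, or to $\overline{T_2}$.
   Context: A unit square graph is a graph $G$ admitting $f\colon V(G)\to\mathbb{R}^2$ with $vw\in E(G)$ iff $\|f(v)-f(w)\|_\infty\le1$ for distinct $v,w$. $\overline{H}$ denotes the complement of $H$; $3K_2$ is the disjoint union of three edges. $T_2$ is the tree on vertices $w_1,\dots,w_7$ with edges $w_1w_2, w_1w_4, w_1w_6, w_2w_3, w_4w_5, w_6w_7$ (a claw with each edge subdivided once). *)

(* Defs.v *)
From Stdlib Require Import Reals Lra Lia.
Open Scope R_scope.

Definition simple_graph (V : Type) (adj : V -> V -> Prop) : Prop :=
  (forall v, ~ adj v v) /\ (forall v w, adj v w -> adj w v).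

Definition linf_dist (p q : R * R) : R :=
  Rmax (Rabs (fst p - fst q)) (Rabs (snd p - snd q)).

Definition unit_square_graph (V : Type) (adj : V -> V -> Prop) : Prop :=
  exists f : V -> R * R,
    forall v w, v <> w -> (adj v w <-> linf_dist (f v) (f w) <= 1).

Definition has_induced_copy (n : nat) (hadj : nat -> nat -> Prop)
    (V : Type) (adj : V -> V -> Prop) : Prop :=
  exists phi : nat -> V,
    (forall i j, (i < n)%nat -> (j < n)%nat -> i <> j -> phi i <> phi j) /\
    (forall i j, (i < n)%nat -> (j < n)%nat -> i <> j ->
       (adj (phi i) (phi j) <-> hadj i j)).

Definition compl_adj (hadj : nat -> nat -> Prop) (i j : nat) : Prop :=
  i <> j /\ ~ hadj i j.

(* K_{2,3} on {0,1} | {2,3,4} (used on vertices 0..4) *)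
Definition K23_adj (i j : nat) : Prop :=
  ((i < 2)%nat /\ (2 <= j)%nat) \/ ((j < 2)%nat /\ (2 <= i)%nat).

(* 3K_2 on vertices 0..5 with edges 01, 23, 45 *)
Definition threeK2_adj (i j : nat) : Prop :=
  i <> j /\ Nat.div i 2 = Nat.div j 2.

(* T_2 on vertices 0..6 (w_k = k-1): edges w1w2, w1w4, w1w6, w2w3, w4w5, w6w7 *)
Definition T2_edge (i j : nat) : Prop :=
  (i = 0%nat /\ j = 1%nat) \/ (i = 0%nat /\ j = 3%nat) \/ (i = 0%nat /\ j = 5%nat) \/
  (i = 1%nat /\ j = 2%nat) \/ (i = 3%nat /\ j = 4%nat) \/ (i = 5%nat /\ j = 6%nat).
Definition T2_adj (i j : nat) : Prop := T2_edge i j \/ T2_edge j i.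

(* Main.v *)
Require Import Defs.
From Stdlib Require Import Reals Lra Lia.
Open Scope R_scope.

Ltac slv := lra || (match goal with H: _ \/ _ |- _ => destruct H as [H|H]; slv end).

Lemma K23core (x0 y0 x1 y1 x2 y2 x3 y3 x4 y4 : R) :
  x0 - x2 <= 1 ->
  x2 - x0 <= 1 ->
  y0 - y2 <= 1 ->
  y2 - y0 <= 1 ->
  x0 - x3 <= 1 ->
  x3 - x0 <= 1 ->
  y0 - y3 <= 1 ->
  y3 - y0 <= 1 ->
  x0 - x4 <= 1 ->
  x4 - x0 <= 1 ->
  y0 - y4 <= 1 ->
  y4 - y0 <= 1 ->
  x1 - x2 <= 1 ->
  x2 - x1 <= 1 ->
  y1 - y2 <= 1 ->
  y2 - y1 <= 1 ->
  x1 - x3 <= 1 ->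
  x3 - x1 <= 1 ->
  y1 - y3 <= 1 ->
  y3 - y1 <= 1 ->
  x1 - x4 <= 1 ->
  x4 - x1 <= 1 ->
  y1 - y4 <= 1 ->
  y4 - y1 <= 1 ->
  (x0 - x1 > 1 \/ x1 - x0 > 1 \/ y0 - y1 > 1 \/ y1 - y0 > 1) ->
  (x2 - x3 > 1 \/ x3 - x2 > 1 \/ y2 - y3 > 1 \/ y3 - y2 > 1) ->
  (x2 - x4 > 1 \/ x4 - x2 > 1 \/ y2 - y4 > 1 \/ y4 - y2 > 1) ->
  (x3 - x4 > 1 \/ x4 - x3 > 1 \/ y3 - y4 > 1 \/ y4 - y3 > 1) -> False.
Proof. intros. slv. Qed.

Lemma K2core (x0 y0 x1 y1 x2 y2 x3 y3 x4 y4 x5 y5 : R) :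
  x0 - x2 <= 1 ->
  x2 - x0 <= 1 ->
  y0 - y2 <= 1 ->
  y2 - y0 <= 1 ->
  x0 - x3 <= 1 ->
  x3 - x0 <= 1 ->
  y0 - y3 <= 1 ->
  y3 - y0 <= 1 ->
  x0 - x4 <= 1 ->
  x4 - x0 <= 1 ->
  y0 - y4 <= 1 ->
  y4 - y0 <= 1 ->
  x0 - x5 <= 1 ->
  x5 - x0 <= 1 ->
  y0 - y5 <= 1 ->
  y5 - y0 <= 1 ->
  x1 - x2 <= 1 ->
  x2 - x1 <= 1 ->
  y1 - y2 <= 1 ->
  y2 - y1 <= 1 ->
  x1 - x3 <= 1 ->
  x3 - x1 <= 1 ->
  y1 - y3 <= 1 ->
  y3 - y1 <= 1 ->
  x1 - x4 <= 1 ->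
  x4 - x1 <= 1 ->
  y1 - y4 <= 1 ->
  y4 - y1 <= 1 ->
  x1 - x5 <= 1 ->
  x5 - x1 <= 1 ->
  y1 - y5 <= 1 ->
  y5 - y1 <= 1 ->
  x2 - x4 <= 1 ->
  x4 - x2 <= 1 ->
  y2 - y4 <= 1 ->
  y4 - y2 <= 1 ->
  x2 - x5 <= 1 ->
  x5 - x2 <= 1 ->
  y2 - y5 <= 1 ->
  y5 - y2 <= 1 ->
  x3 - x4 <= 1 ->
  x4 - x3 <= 1 ->
  y3 - y4 <= 1 ->
  y4 - y3 <= 1 ->
  x3 - x5 <= 1 ->
  x5 - x3 <= 1 ->
  y3 - y5 <= 1 ->
  y5 - y3 <= 1 ->
  (x0 - x1 > 1 \/ x1 - x0 > 1 \/ y0 - y1 > 1 \/ y1 - y0 > 1) ->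
  (x2 - x3 > 1 \/ x3 - x2 > 1 \/ y2 - y3 > 1 \/ y3 - y2 > 1) ->
  (x4 - x5 > 1 \/ x5 - x4 > 1 \/ y4 - y5 > 1 \/ y5 - y4 > 1) -> False.
Proof. intros. slv. Qed.

Lemma T2core (x0 y0 x1 y1 x2 y2 x3 y3 x4 y4 x5 y5 x6 y6 : R) :
  x0 - x2 <= 1 ->
  x2 - x0 <= 1 ->
  y0 - y2 <= 1 ->
  y2 - y0 <= 1 ->
  x0 - x4 <= 1 ->
  x4 - x0 <= 1 ->
  y0 - y4 <= 1 ->
  y4 - y0 <= 1 ->
  x0 - x6 <= 1 ->
  x6 - x0 <= 1 ->
  y0 - y6 <= 1 ->
  y6 - y0 <= 1 ->
  x1 - x3 <= 1 ->
  x3 - x1 <= 1 ->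
  y1 - y3 <= 1 ->
  y3 - y1 <= 1 ->
  x1 - x4 <= 1 ->
  x4 - x1 <= 1 ->
  y1 - y4 <= 1 ->
  y4 - y1 <= 1 ->
  x1 - x5 <= 1 ->
  x5 - x1 <= 1 ->
  y1 - y5 <= 1 ->
  y5 - y1 <= 1 ->
  x1 - x6 <= 1 ->
  x6 - x1 <= 1 ->
  y1 - y6 <= 1 ->
  y6 - y1 <= 1 ->
  x2 - x3 <= 1 ->
  x3 - x2 <= 1 ->
  y2 - y3 <= 1 ->
  y3 - y2 <= 1 ->
  x2 - x4 <= 1 ->
  x4 - x2 <= 1 ->
  y2 - y4 <= 1 ->
  y4 - y2 <= 1 ->
  x2 - x5 <= 1 ->
  x5 - x2 <= 1 ->
  y2 - y5 <= 1 ->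
  y5 - y2 <= 1 ->
  x2 - x6 <= 1 ->
  x6 - x2 <= 1 ->
  y2 - y6 <= 1 ->
  y6 - y2 <= 1 ->
  x3 - x5 <= 1 ->
  x5 - x3 <= 1 ->
  y3 - y5 <= 1 ->
  y5 - y3 <= 1 ->
  x3 - x6 <= 1 ->
  x6 - x3 <= 1 ->
  y3 - y6 <= 1 ->
  y6 - y3 <= 1 ->
  x4 - x5 <= 1 ->
  x5 - x4 <= 1 ->
  y4 - y5 <= 1 ->
  y5 - y4 <= 1 ->
  x4 - x6 <= 1 ->
  x6 - x4 <= 1 ->
  y4 - y6 <= 1 ->
  y6 - y4 <= 1 ->
  (x0 - x1 > 1 \/ x1 - x0 > 1 \/ y0 - y1 > 1 \/ y1 - y0 > 1) ->
  (x0 - x3 > 1 \/ x3 - x0 > 1 \/ y0 - y3 > 1 \/ y3 - y0 > 1) ->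
  (x0 - x5 > 1 \/ x5 - x0 > 1 \/ y0 - y5 > 1 \/ y5 - y0 > 1) ->
  (x1 - x2 > 1 \/ x2 - x1 > 1 \/ y1 - y2 > 1 \/ y2 - y1 > 1) ->
  (x3 - x4 > 1 \/ x4 - x3 > 1 \/ y3 - y4 > 1 \/ y4 - y3 > 1) ->
  (x5 - x6 > 1 \/ x6 - x5 > 1 \/ y5 - y6 > 1 \/ y6 - y5 > 1) -> False.
Proof. intros. slv. Qed.

Lemma A4 p q : linf_dist p q <= 1 ->
  fst p - fst q <= 1 /\ fst q - fst p <= 1 /\ snd p - snd q <= 1 /\ snd q - snd p <= 1.
Proof.
  unfold linf_dist, Rmax, Rabs.
  destruct (Rcase_abs (fst p - fst q)); destruct (Rcase_abs (snd p - snd q));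
  destruct (Rle_dec _ _); intros; lra.
Qed.

Lemma N4 p q : ~ linf_dist p q <= 1 ->
  fst p - fst q > 1 \/ fst q - fst p > 1 \/ snd p - snd q > 1 \/ snd q - snd p > 1.
Proof.
  unfold linf_dist, Rmax, Rabs.
  destruct (Rcase_abs (fst p - fst q)); destruct (Rcase_abs (snd p - snd q));
  destruct (Rle_dec _ _); intros; lra.
Qed.

Section Glue.
Variables (V : Type) (adj : V -> V -> Prop) (f : V -> R * R) (phi : nat -> V)
  (n : nat) (hadj : nat -> nat -> Prop).
Hypothesis Hf : forall v w, v <> w -> (adj v w <-> linf_dist (f v) (f w) <= 1).
Hypothesis Hinj : forall i j, (i < n)%nat -> (j < n)%nat -> i <> j -> phi i <> phi j.
Hypothesis Hiff : forall i j, (i < n)%nat -> (j < n)%nat -> i <> j ->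
       (adj (phi i) (phi j) <-> hadj i j).

Lemma adj_lin i j : (i < n)%nat -> (j < n)%nat -> i <> j -> hadj i j ->
  linf_dist (f (phi i)) (f (phi j)) <= 1.
Proof. intros. apply Hf; [apply Hinj; auto|]. apply Hiff; auto. Qed.

Lemma nadj_lin i j : (i < n)%nat -> (j < n)%nat -> i <> j -> ~ hadj i j ->
  ~ linf_dist (f (phi i)) (f (phi j)) <= 1.
Proof. intros ? ? ? Hn Hl. apply Hn. apply Hiff; auto. apply Hf; [apply Hinj; auto|auto]. Qed.
End Glue.

Ltac pat := unfold K23_adj, compl_adj, threeK2_adj, T2_adj, T2_edge; cbn; lia.

Ltac closeG Hf Hinj Hiff :=
  match goal with
  | |- fst (?f (?phi ?i)) - fst (?f (?phi ?j)) <= 1 =>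
      pose proof (A4 _ _ (adj_lin _ _ _ _ _ _ Hf Hinj Hiff i j ltac:(lia) ltac:(lia) ltac:(lia) ltac:(pat))); lra
  | |- snd (?f (?phi ?i)) - snd (?f (?phi ?j)) <= 1 =>
      pose proof (A4 _ _ (adj_lin _ _ _ _ _ _ Hf Hinj Hiff i j ltac:(lia) ltac:(lia) ltac:(lia) ltac:(pat))); lra
  | |- fst (?f (?phi ?i)) - fst (?f (?phi ?j)) > 1 \/ _ =>
      apply N4; apply (nadj_lin _ _ _ _ _ _ Hf Hinj Hiff i j); [lia|lia|lia|pat]
  end.

Theorem mainTheorem7 (V : Type) (adj : V -> V -> Prop) :
  simple_graph V adj ->
  unit_square_graph V adj ->
  ~ has_induced_copy 5 K23_adj V adj /\
  ~ has_induced_copy 6 (compl_adj threeK2_adj) V adj /\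
  ~ has_induced_copy 7 (compl_adj T2_adj) V adj.
Proof.
  intros _ [f Hf]. split; [|split]; intros [phi [Hinj Hiff]].
  - apply (K23core (fst (f (phi 0%nat))) (snd (f (phi 0%nat))) (fst (f (phi 1%nat))) (snd (f (phi 1%nat))) (fst (f (phi 2%nat))) (snd (f (phi 2%nat))) (fst (f (phi 3%nat))) (snd (f (phi 3%nat))) (fst (f (phi 4%nat))) (snd (f (phi 4%nat)))); closeG Hf Hinj Hiff.
  - apply (K2core (fst (f (phi 0%nat))) (snd (f (phi 0%nat))) (fst (f (phi 1%nat))) (snd (f (phi 1%nat))) (fst (f (phi 2%nat))) (snd (f (phi 2%nat))) (fst (f (phi 3%nat))) (snd (f (phi 3%nat))) (fst (f (phi 4%nat))) (snd (f (phi 4%nat))) (fst (f (phi 5%nat))) (snd (f (phi 5%nat)))); closeG Hf Hinj Hiff.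
  - apply (T2core (fst (f (phi 0%nat))) (snd (f (phi 0%nat))) (fst (f (phi 1%nat))) (snd (f (phi 1%nat))) (fst (f (phi 2%nat))) (snd (f (phi 2%nat))) (fst (f (phi 3%nat))) (snd (f (phi 3%nat))) (fst (f (phi 4%nat))) (snd (f (phi 4%nat))) (fst (f (phi 5%nat))) (snd (f (phi 5%nat))) (fst (f (phi 6%nat))) (snd (f (phi 6%nat)))); closeG Hf Hinj Hiff.
Qed.
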